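(* Let $\mathbf{T}\in\{0,1\}^{n\times\ell}$ be a matrix consisting of $\ell\ge 14$ dirty columns with $\delta(\mathbf{T})=3$. Then there is a permutation of the rows of $\mathbf{T}$ such that the resulting matrix $\mathbf{T}'$ satisfies $|\mathcal{T}'_3|\ge 5$.
   Context: A column of a binary matrix is dirty if it contains both $0$ and $1$. For rows $u,w\in\{0,1\}^\ell$, $D(u,w)=\{j:u[j]\ne w[j]\}$ and $d(u,w)=|D(u,w)|$; $\delta(\mathbf{T})=\max_{i\ne i'}d(\mathbf{T}[i],\mathbf{T}[i'])$. For a matrix $\mathbf{T}'$ with $n$ rows $\mathbf{T}'[1],\dots,\mathbf{T}'[n]$, $\mathcal{T}'_3$ is the set system (without duplicates) $\{D(\mathbf{T}'[i],\mathbf{T}'[n]): i\in[n-1],\ d(\mathbf{T}'[i],\mathbf{T}'[n])=3\}$. *)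

(* Defs.v *)
From mathcomp Require Import all_boot all_order all_algebra all_fingroup.
Set Implicit Arguments. Unset Strict Implicit. Unset Printing Implicit Defensive.

Definition dirty_col (m l : nat) (T : 'M[bool]_(m, l)) (j : 'I_l) : Prop :=
  (exists i, T i j = false) /\ (exists i, T i j = true).

Definition Dset (m l : nat) (T : 'M[bool]_(m, l)) (i i' : 'I_m) : {set 'I_l} :=
  [set j | T i j != T i' j].

Definition dist (m l : nat) (T : 'M[bool]_(m, l)) (i i' : 'I_m) : nat :=
  #|Dset T i i'|.

Definition delta (m l : nat) (T : 'M[bool]_(m, l)) : nat :=
  \max_(p : 'I_m * 'I_m | p.1 != p.2) dist T p.1 p.2.

Definition permute_rows (m l : nat) (s : 'S_m) (T : 'M[bool]_(m, l)) : 'M[bool]_(m, l) :=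
  \matrix_(i, j) T (s i) j.

Definition calT3 (n l : nat) (T : 'M[bool]_(n.+1, l)) : {set {set 'I_l}} :=
  [set Dset T i ord_max | i in [pred i : 'I_n.+1 | (i != ord_max) && (dist T i ord_max == 3)]].

(* Main.v *)
Require Import Defs.
From mathcomp Require Import all_boot all_order all_algebra all_fingroup.
From mathcomp Require Import zify.
Set Implicit Arguments. Unset Strict Implicit. Unset Printing Implicit Defensive.

Lemma Dset_perm m l (s : 'S_m) (T : 'M[bool]_(m,l)) i i' :
  Dset (permute_rows s T) i i' = Dset T (s i) (s i').
Proof. by apply/setP => j; rewrite !inE !mxE. Qed.

Lemma Dset_same m l (T : 'M[bool]_(m,l)) i : Dset T i i = set0.
Proof. by apply/setP => j; rewrite !inE eqxx. Qed.

Lemma dist_le3 n l (T : 'M[bool]_(n.+1,l)) x y : delta T = 3 -> dist T x y <= 3.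
Proof.
move=> hd; case: (eqVneq x y) => [->|nxy].
  by rewrite /dist Dset_same cards0.
rewrite -hd /delta.
exact: (@leq_bigmax_cond _ (fun p : 'I_n.+1 * 'I_n.+1 => p.1 != p.2)
          (fun p => dist T p.1 p.2) (x,y) nxy).
Qed.

Lemma exists_pair n l (T : 'M[bool]_(n.+1,l)) :
  delta T = 3 -> exists r s, dist T r s = 3.
Proof.
move=> hd.
case: (boolP [exists p : 'I_n.+1 * 'I_n.+1, dist T p.1 p.2 == 3]).
  by case/existsP => p /eqP h; exists p.1, p.2.
move/existsPn => h; exfalso.
have : delta T <= 2.
  apply/bigmax_leqP => p _.
  have := dist_le3 p.1 p.2 hd; have := h p.
  by move=> ne le; rewrite -ltnS ltn_neqAle ne le.
by rewrite hd.
Qed.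

Lemma key n l (T : 'M[bool]_(n.+1,l)) r s x j :
  delta T = 3 -> dist T r s = 3 -> j \notin Dset T r s -> T x j != T r j ->
  [/\ dist T x r + dist T x s = 5,
      forall j', j' \notin Dset T r s -> j' \in Dset T x r -> j' = j &
      forall j', j' \notin Dset T r s -> j' \in Dset T x s -> j' = j].
Proof.
move=> hd hrs hj hx.
set A := Dset T r s; set D1 := Dset T x r; set D2 := Dset T x s.
have e1 : D2 :\: A = D1 :\: A.
  by apply/setP => k; rewrite !inE; case: (T x k); case: (T r k); case: (T s k).
have e2 : D2 :&: A = A :\: D1.
  by apply/setP => k; rewrite !inE; case: (T x k); case: (T r k); case: (T s k).
have c1 := cardsID A D1.
have c2 := cardsID A D2.
have c3 := cardsID D1 A.
rewrite e1 e2 in c2.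
rewrite setIC in c3.
have l1 := dist_le3 x r hd.
have l2 := dist_le3 x s hd.
rewrite /dist -/D1 -/D2 in l1 l2 *.
rewrite /dist -/A in hrs.
have jB : j \in D1 :\: A by rewrite in_setD hj /= inE hx.
have B1 : #|D1 :\: A| <= 1 by lia.
have B0 : 0 < #|D1 :\: A| by apply/card_gt0P; exists j.
have uniqB : forall j', j' \in D1 :\: A -> j' = j.
  move=> j' hj'; apply/eqP; apply/negPn/negP => ne.
  have : #|[set j'; j]| <= #|D1 :\: A|.
    by apply: subset_leq_card; apply/subsetP => k; rewrite in_set2 => /orP [] /eqP ->.
  by rewrite cards2 ne; lia.
split.
- lia.
- by move=> j' h1 h2; apply: uniqB; rewrite inE h1 h2.
- by move=> j' h1 h2; apply: uniqB; rewrite -e1 inE h1 h2.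
Qed.

Lemma final n l (T : 'M[bool]_(n.+1,l)) (b : 'I_n.+1) (J' : {set 'I_l})
  (g : 'I_l -> 'I_n.+1) :
  5 <= #|J'| -> (forall j, j \in J' -> dist T (g j) b = 3) ->
  {in J' &, injective (fun j => Dset T (g j) b)} ->
  exists s : 'S_n.+1, 5 <= #|calT3 (permute_rows s T)|.
Proof.
move=> h5 hd hinj; exists (tperm b ord_max).
apply: leq_trans h5 _; rewrite -(card_in_imset hinj).
apply: subset_leq_card; apply/subsetP => D /imsetP [j hj ->].
apply/imsetP; exists (tperm b ord_max (g j)).
  rewrite inE /=; apply/andP; split.
    apply/eqP => h.
    have e : g j = b by rewrite -(tpermK b ord_max (g j)) h tpermR.
    by move: (hd j hj); rewrite e /dist Dset_same cards0.
  by rewrite /dist Dset_perm tpermK tpermR; apply/eqP; exact: hd.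
by rewrite Dset_perm tpermK tpermR.
Qed.

Theorem lemma15 (n l : nat) (T : 'M[bool]_(n.+1, l)) :
  14 <= l ->
  (forall j : 'I_l, dirty_col T j) ->
  delta T = 3 ->
  exists s : 'S_n.+1, 5 <= #|calT3 (permute_rows s T)|.
Proof.
move=> hl hdirty hd.
have [r [s hrs]] := exists_pair hd.
set A := Dset T r s.
pose f j := odflt r [pick i | T i j != T r j].
have hf : forall j, T (f j) j != T r j.
  move=> j; rewrite /f; case: pickP => [i //|h] /=; exfalso.
  case: (hdirty j) => [[i0 h0] [i1 h1]].
  have := h i0; have := h i1; rewrite h0 h1.
  by case: (T r j).
have hrsj : forall j, j \notin A -> T r j = T s j.
  by move=> j; rewrite inE negbK => /eqP.
set J := ~: A.
have hJ : 11 <= #|J|.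
  have := cardsC A; rewrite card_ord.
  by move: hrs; rewrite /J /dist -/A; lia.
set P := [set j | dist T (f j) r == 3].
have := cardsID P J.
set Jr := J :&: P; set Js := J :\: P => hc.
have h5or : (5 <= #|Jr|) \/ (5 <= #|Js|).
  rewrite -hc in hJ. case: (leqP 5 #|Jr|) => h; [by left|right]. move: hJ h. set a := #|Jr|. set b := #|Js|. lia.
case: h5or => h5.
- apply: (@final _ _ T r Jr f h5).
    by move=> j; rewrite !inE => /andP [_ /eqP].
  move=> j1 j2; rewrite !in_setI !in_setC => /andP [hj1 _] /andP [hj2 _] e.
  have [_ k _] := @key _ _ T r s (f j2) j2 hd hrs hj2 (hf j2).
  apply: k => //; rewrite -e inE; exact: hf.
- apply: (@final _ _ T s Js f h5).
    move=> j; rewrite in_setD in_setC => /andP [ne hjA].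
    rewrite inE in ne.
    have [k _ _] := @key _ _ T r s (f j) j hd hrs hjA (hf j).
    have := dist_le3 (f j) r hd; have := dist_le3 (f j) s hd.
    by move: ne; lia.
  move=> j1 j2; rewrite !in_setD !in_setC => /andP [_ hj1] /andP [_ hj2] e.
  have [_ _ k] := @key _ _ T r s (f j2) j2 hd hrs hj2 (hf j2).
  apply: k => //; rewrite -e inE -hrsj //; exact: hf.
Qed.
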